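(* Let $\mathcal C$ be a finite set (a codebook) and let $P(\cdot\mid\cdot)$ be the transition kernel of an ergodic (irreducible and aperiodic) Markov chain on $\mathcal C$ with stationary distribution $\pi$. For each $m\in\mathbb N$ let $\boldsymbol X=\{X_{ij}\}_{1\le i,j\le m}$ be a random $m\times m$ array with entries in $\mathcal C$ generated according to either of the following two scenarios: (Scenario 1) the $m$ columns $(X_{1j},X_{2j},\dots,X_{mj})$, $j=1,\dots,m$, are mutually independent, and each is a Markov chain read from top to bottom with initial distribution $\pi$ and transition kernel $P$; (Scenario 2) the $m$ rows $(X_{i1},X_{i2},\dots,X_{im})$, $i=1,\dots,m$, are mutually independent, and each is a Markov chain read from left to right with initial distribution $\pi$ and transition kernel $P$. Let $\operatorname{flat}(\boldsymbol X)=(X_{11},\dots,X_{1m},X_{21},\dots,X_{2m},\dots,X_{m1},\dots,X_{mm})$ be the row-major flattening, and for a probability model $Q$ on finite sequences over $\mathcal C$ set $\mathcal L_m(Q)=-\frac{1}{m^2}\mathbb E[\log Q(\operatorname{flat}(\boldsymbol X))]$. Then $$\liminf_{m\to\infty}\ \min_{Q\in\mathcal Q_{\text{1-gram}}}\mathcal L_m(Q)\ \ge\ H(\pi)=-\sum_{a\in\mathcal C}\pi(a)\log\pi(a),$$ while, with the minimum taken over all probability distributions $Q$ on finite sequences over $\mathcal C$, $$\lim_{m\to\infty}\ \min_{Q}\mathcal L_m(Q)\ =\ H_\infty:=-\sum_{a\in\mathcal C}\sum_{a'\in\mathcal C}\pi(a)P(a'\mid a)\log P(a'\mid a).$$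
   Context: A unigram model $Q\in\mathcal Q_{\text{1-gram}}$ over a token set $\mathcal T$ is specified by a probability distribution $Q_\#$ on $\mathbb N$ and a probability distribution $Q_{\text{tok}}$ on $\mathcal T$, and assigns to a finite token sequence $\mathbf t=(t_1,\dots,t_{|\mathbf t|})$ the probability $Q(\mathbf t)=Q_\#(|\mathbf t|)\prod_{r=1}^{|\mathbf t|}Q_{\text{tok}}(t_r)$. Here the tokens are the elements of $\mathcal C$. Logarithms are natural; $H(p)=-\sum_{y\in\operatorname{supp}(p)}p(y)\log p(y)$ is the Shannon entropy. *)

(* Defs.v *)
From HB Require Import structures.
From mathcomp Require Import all_boot all_order all_algebra.
From mathcomp Require Import all_classical all_reals all_analysis.
Set Implicit Arguments. Unset Strict Implicit. Unset Printing Implicit Defensive.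
Import Order.TTheory GRing.Theory Num.Theory.
Local Open Scope ring_scope.
Local Open Scope classical_set_scope.

Section Defs.
Variables (R : realType) (T : finType).

Definition is_pmf (p : T -> R) : Prop :=
  (forall a, 0 <= p a) /\ \sum_(a : T) p a = 1.

Definition is_pmf_count (I : choiceType) (p : I -> R) : Prop :=
  (forall i, 0 <= p i) /\ esum [set: I] (fun i => (p i)%:E) = 1%E.

(** Transition kernel: P a b = P(b | a). *)
Definition is_kernel (P : T -> T -> R) : Prop :=
  (forall a b, 0 <= P a b) /\ (forall a, \sum_(b : T) P a b = 1).

Fixpoint nstep (P : T -> T -> R) (n : nat) (a b : T) : R :=
  match n with
  | 0 => if a == b then 1 else 0
  | k.+1 => \sum_(c : T) nstep P k a c * P c b
  end.

Definition irreducible (P : T -> T -> R) : Prop :=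
  forall a b, exists n, 0 < nstep P n a b.

(** Period of every state is 1: the only common divisor of all return
    times {n >= 1 | P^n(a,a) > 0} is 1 (i.e. their gcd is 1). *)
Definition aperiodic (P : T -> T -> R) : Prop :=
  forall a (d : nat),
    (forall n, (0 < n)%N -> 0 < nstep P n a a -> (d %| n)%N) -> d = 1%N.

Definition ergodic (P : T -> T -> R) : Prop :=
  is_kernel P /\ irreducible P /\ aperiodic P.

Definition stationary (P : T -> T -> R) (pi : T -> R) : Prop :=
  is_pmf pi /\ forall b, \sum_(a : T) pi a * P a b = pi b.

Definition mc_prob (pi : T -> R) (P : T -> T -> R) (s : seq T) : R :=
  if s is a :: t then
    pi a * \prod_(k < size t) P (nth a s k) (nth a s k.+1)
  else 1.

Definition col_seq m (x : 'M[T]_m) (j : 'I_m) : seq T :=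
  [seq x i j | i <- enum 'I_m].
Definition row_seq m (x : 'M[T]_m) (i : 'I_m) : seq T :=
  [seq x i j | j <- enum 'I_m].

Definition law_cols (pi : T -> R) (P : T -> T -> R) m (x : 'M[T]_m) : R :=
  \prod_(j < m) mc_prob pi P (col_seq x j).
Definition law_rows (pi : T -> R) (P : T -> T -> R) m (x : 'M[T]_m) : R :=
  \prod_(i < m) mc_prob pi P (row_seq x i).

Definition flat m (x : 'M[T]_m) : seq T :=
  [seq x i j | i <- enum 'I_m, j <- enum 'I_m].

Definition neglog (q : R) : \bar R :=
  if 0 < q then (- ln q)%:E else +oo%E.

(** L_m(Q) = -(1/m^2) E[log Q(flat X)], X with law [law]
    (expectation over the support of the law). *)
Definition loss (law : forall m, 'M[T]_m -> R) m (Q : seq T -> R) : \bar R :=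
  (((m ^ 2)%N)%:R^-1)%:E *
    (\sum_(x : 'M[T]_m | (0 < law m x)%R) (law m x)%:E * neglog (Q (flat x)))%E.

Definition seq_model (Q : seq T -> R) : Prop := is_pmf_count Q.

(** Unigram model with length law Qn and token law Qt. *)
Definition unigram (Qn : nat -> R) (Qt : T -> R) (t : seq T) : R :=
  Qn (size t) * \prod_(r <- t) Qt r.

Definition unigram_class : set (seq T -> R) :=
  [set Q | exists Qn Qt, [/\ is_pmf_count Qn, is_pmf Qt & Q = unigram Qn Qt]].

Definition min_loss (law : forall m, 'M[T]_m -> R) (C : set (seq T -> R)) m
  : \bar R := ereal_inf [set loss law m Q | Q in C].

Definition entropy (p : T -> R) : R :=
  - \sum_(a : T | 0 < p a) p a * ln (p a).
Definition entropy_rate (pi : T -> R) (P : T -> T -> R) : R :=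
  - \sum_(a : T) \sum_(b : T | 0 < P a b) pi a * P a b * ln (P a b).

End Defs.

(* Main.v *)
Require Import Defs.
From HB Require Import structures.
From mathcomp Require Import all_boot all_order all_algebra.
From mathcomp Require Import all_classical all_reals all_analysis.
From mathcomp Require Import ring lra.
Set Implicit Arguments. Unset Strict Implicit. Unset Printing Implicit Defensive.
Import Order.TTheory GRing.Theory Num.Theory.
Local Open Scope ring_scope.
Local Open Scope classical_set_scope.

Section Chain.
Variables (R : realType) (T : finType) (P : T -> T -> R) (pi : T -> R).
Hypotheses (hK : is_kernel P) (hS : stationary P pi).

Definition cf (a : T) (t : seq T) : R :=
  \prod_(k < size t) P (nth a (a::t) k) (nth a (a::t) k.+1).

Lemma cf_cons a b t : cf a (b::t) = P a b * cf b t.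
Proof.
rewrite /cf /= big_ord_recl /=; congr (_ * _); apply: eq_bigr => k _ /=.
rewrite /bump /=.
rewrite !add0n (@set_nth_default _ t b a k) // (@set_nth_default _ (b::t) b a k) //; exact: leqW (ltn_ord k).
Qed.

Lemma cf_ge0 a t : 0 <= cf a t.
Proof. by apply: prodr_ge0 => k _; apply: hK.1. Qed.

Lemma mc_cons a t : mc_prob pi P (a :: t) = pi a * cf a t.
Proof. by []. Qed.

Lemma sum_tuple0 (F : seq T -> R) : \sum_(t : 0.-tuple T) F t = F [::].
Proof. by rewrite (big_pred1 [tuple]) // => t; apply/esym/eqP/tuple0. Qed.

Lemma sum_tuple_cons n (F : seq T -> R) :
  \sum_(t : n.+1.-tuple T) F t = \sum_b \sum_(t : n.-tuple T) F (b :: t).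
Proof.
rewrite pair_big /=.
rewrite (reindex (fun p : T * n.-tuple T => [tuple of p.1 :: p.2])) //=.
exists (fun t : n.+1.-tuple T => (thead t, [tuple of behead t])).
  by move=> [b t] _ /=; congr pair; apply: val_inj.
by move=> t _; apply: val_inj => /=; case: t => [[|b s] //=].
Qed.

Lemma sum_cf n a : \sum_(t : n.-tuple T) cf a t = 1.
Proof.
elim: n a => [|n IH] a; first by rewrite sum_tuple0 /cf big_ord0.
rewrite sum_tuple_cons.
under eq_bigr do (under eq_bigr do rewrite cf_cons; rewrite -big_distrr /= IH mulr1).
exact: hK.2.
Qed.

Lemma sum_stat (X : T -> R) :
  \sum_a pi a * \sum_b P a b * X b = \sum_b pi b * X b.
Proof.
under eq_bigr do rewrite big_distrr /=.
rewrite exchange_big /=; apply: eq_bigr => b _.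
under eq_bigr do rewrite mulrA.
by rewrite -big_distrl /= hS.2.
Qed.

Lemma marg n i (h : T -> R) a0 : (i <= n)%N ->
  \sum_a pi a * \sum_(t : n.-tuple T) (cf a t * h (nth a0 (a::t) i))
  = \sum_a pi a * h a.
Proof.
elim: n i => [|n IH] [|i] //= hi.
- by apply: eq_bigr => a _; rewrite -big_distrl /= sum_cf mul1r.
- by apply: eq_bigr => a _; rewrite -big_distrl /= sum_cf mul1r.
rewrite -(IH i hi).
rewrite -(sum_stat (fun b => \sum_(t : n.-tuple T) cf b t * h (nth a0 (b::t) i))).
apply: eq_bigr => a _; congr (_ * _).
rewrite (sum_tuple_cons _ (fun s => cf a s * h (nth a0 (a::s) i.+1))) /=.
apply: eq_bigr => b _; rewrite big_distrr /=; apply: eq_bigr => t _.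
by rewrite cf_cons mulrA.
Qed.

Definition rho := \sum_a pi a * \sum_b P a b * ln (P a b).

Lemma xlnx_mul (u v : R) : 0 <= u -> 0 <= v ->
  (u * v) * ln (u * v) = (u * v) * (ln u + ln v).
Proof.
rewrite !le0r => /orP[/eqP->|u0]; first by rewrite !mul0r.
move=> /orP[/eqP->|v0]; first by rewrite !mulr0 !mul0r.
by rewrite lnM // posrE.
Qed.

Lemma entropy_cf n :
  \sum_a pi a * \sum_(t : n.-tuple T) cf a t * ln (cf a t) = n%:R * rho.
Proof.
elim: n => [|n IH].
  by rewrite mul0r; apply: big1 => a _;
    rewrite (sum_tuple0 (fun s => cf a s * ln (cf a s))) /cf big_ord0 ln1 mulr0 mulr0.
have step a : \sum_(t : n.+1.-tuple T) cf a t * ln (cf a t) =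
  \sum_b P a b * ln (P a b) +
  \sum_b P a b * \sum_(t : n.-tuple T) cf b t * ln (cf b t).
  rewrite (sum_tuple_cons _ (fun s => cf a s * ln (cf a s))) -big_split /=.
  apply: eq_bigr => b _.
  under eq_bigr do rewrite cf_cons xlnx_mul ?cf_ge0 ?hK.1 // mulrDr.
  rewrite big_split /=; congr (_ + _).
    rewrite (eq_bigr (fun t : n.-tuple T => (P a b * ln (P a b)) * cf b t)); last by move=> t _; ring.
    by rewrite -big_distrr /= sum_cf mulr1.
  by rewrite big_distrr; apply: eq_bigr => t _; rewrite -mulrA.
under eq_bigr do rewrite step mulrDr.
rewrite big_split /= sum_stat IH -/rho mulrSr mulrDl mul1r addrC //.
Qed.

Lemma sum_mc n : \sum_(t : n.+1.-tuple T) mc_prob pi P t = 1.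
Proof.
rewrite sum_tuple_cons.
under eq_bigr do (under eq_bigr do rewrite mc_cons; rewrite -big_distrr /= sum_cf mulr1).
exact: hS.1.2.
Qed.

Lemma marg_mc n i (h : T -> R) a0 : (i <= n)%N ->
  \sum_(t : n.+1.-tuple T) mc_prob pi P t * h (nth a0 t i) = \sum_a pi a * h a.
Proof.
move=> hi; rewrite (sum_tuple_cons _ (fun s => mc_prob pi P s * h (nth a0 s i))).
rewrite -(marg h a0 hi).
apply: eq_bigr => a _; rewrite big_distrr /=; apply: eq_bigr => t _.
by rewrite mulrA.
Qed.

Lemma ent_mc n :
  \sum_(t : n.+1.-tuple T) mc_prob pi P t * ln (mc_prob pi P t)
  = \sum_a pi a * ln (pi a) + n%:R * rho.
Proof.
rewrite (sum_tuple_cons _ (fun s => mc_prob pi P s * ln (mc_prob pi P s))).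
rewrite -entropy_cf -big_split; apply: eq_bigr => a _.
under eq_bigr do rewrite mc_cons xlnx_mul ?cf_ge0 ?hS.1.1 // mulrDr.
rewrite big_split /=; congr (_ + _).
  rewrite (eq_bigr (fun t : n.-tuple T => (pi a * ln (pi a)) * cf a t)); last by move=> t _; ring.
  by rewrite -big_distrr /= sum_cf mulr1.
by rewrite big_distrr; apply: eq_bigr => t _; rewrite -mulrA.
Qed.

End Chain.

Section Mat.
Variables (R : realType) (T : finType).

Lemma sum_cols m (g : 'I_m -> seq T -> R) :
  \sum_(x : 'M[T]_m) \prod_j g j (col_seq x j) =
  \prod_j \sum_(t : m.-tuple T) g j t.
Proof.
rewrite bigA_distr_bigA /=.
rewrite (reindex (fun f : {ffun 'I_m -> m.-tuple T} => \matrix_(i, j) tnth (f j) i)) /=.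
  apply: eq_bigr => f _; apply: eq_bigr => j _; congr (g j _).
  rewrite /col_seq -[in RHS](map_tnth_enum (f j)); apply: eq_map => i.
  by rewrite mxE.
exists (fun x : 'M[T]_m => [ffun j => [tuple x i j | i < m]]).
  move=> f _; apply/ffunP => j; rewrite ffunE; apply: eq_from_tnth => i.
  by rewrite tnth_mktuple mxE.
by move=> x _; apply/matrixP => i j; rewrite mxE ffunE tnth_mktuple.
Qed.

Lemma ln_prod (I : finType) (q : I -> R) : (forall j, 0 < q j) ->
  ln (\prod_j q j) = \sum_j ln (q j).
Proof.
move=> q0.
suff: 0 < \prod_j q j /\ ln (\prod_j q j) = \sum_j ln (q j) by case.
apply: (big_rec2 (fun x y => 0 < x /\ ln x = y)); first by rewrite ln1.
move=> j y1 y2 _ [y0 <-]; split; first by rewrite mulr_gt0.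
by rewrite lnM // posrE.
Qed.

Lemma xlnx_prod (I : finType) (q : I -> R) : (forall j, 0 <= q j) ->
  (\prod_j q j) * ln (\prod_j q j) =
  \sum_l \prod_j (if j == l then q j * ln (q j) else q j).
Proof.
move=> q0; case: (boolP [forall j, 0 < q j]) => [/forallP qp|].
  rewrite ln_prod // big_distrr /=; apply: eq_bigr => l _.
  rewrite (bigD1 l) //= [in RHS](bigD1 l) //= eqxx.
  rewrite [in RHS](eq_bigr q); last by move=> j /negbTE ->.
  ring.
move=> /forallPn [k]; rewrite -leNgt => qk.
have qk0 : q k = 0 by apply/eqP; rewrite eq_le qk q0.
rewrite (bigD1 k) //= qk0 !mul0r; apply/esym/big1 => l _.
by rewrite (bigD1 k) //=; case: ifP => _; rewrite qk0 ?mul0r.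
Qed.

Variables (P : T -> T -> R) (pi : T -> R).
Hypotheses (hK : is_kernel P) (hS : stationary P pi).

Lemma mc_ge0 s : 0 <= mc_prob pi P s.
Proof. case: s => [|a t] //=; rewrite mulr_ge0 ?hS.1.1 //; exact: cf_ge0. Qed.

Lemma law_cols_ge0 m x : 0 <= law_cols pi P (m:=m) x.
Proof. by apply: prodr_ge0 => j _; exact: mc_ge0. Qed.

Lemma law_cols_sum n : \sum_(x : 'M[T]_n.+1) law_cols pi P x = 1.
Proof.
rewrite /law_cols (sum_cols (fun _ => mc_prob pi P)).
by apply: big1 => j _; apply: (sum_mc hK hS).
Qed.

Definition h0 := \sum_a pi a * ln (pi a).

Lemma law_cols_ent n : \sum_(x : 'M[T]_n.+1) law_cols pi P x * ln (law_cols pi P x)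
  = n.+1%:R * (h0 + n%:R * rho P pi).
Proof.
rewrite /law_cols.
under eq_bigr => x _ do rewrite (xlnx_prod (fun j => mc_ge0 (col_seq x j))).
rewrite exchange_big /=.
under eq_bigr => l _ do rewrite (sum_cols (fun j s => if j == l then mc_prob pi P s * ln (mc_prob pi P s) else mc_prob pi P s)).
rewrite -[X in X%:R]card_ord -sum1_card natr_sum big_distrl /=.
apply: eq_bigr => l _; rewrite mul1r (bigD1 l) //= eqxx (ent_mc hK hS) -/h0.
rewrite big1 ?mulr1 //= => j /negbTE ->; exact: (sum_mc hK hS).
Qed.

Lemma law_cols_marg n (i j : 'I_n.+1) (h : T -> R) :
  \sum_(x : 'M[T]_n.+1) law_cols pi P x * h (x i j) = \sum_a pi a * h a.
Proof.
case: (pickP (@predT T)) => [a0 _|no]; last first.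
  rewrite big1; last by move=> x _; have := no (x i j).
  by rewrite big1 // => a _; have := no a.
pose G k s := if k == j then mc_prob pi P s * h (nth a0 s i) else mc_prob pi P s.
transitivity (\sum_(x : 'M[T]_n.+1) \prod_k G k (col_seq x k)).
  apply: eq_bigr => x _; rewrite /law_cols (bigD1 j) //= [in RHS](bigD1 j) //=.
  rewrite /G eqxx [in RHS](eq_bigr (fun k => mc_prob pi P (col_seq x k))); last first.
    by move=> k /negbTE ->.
  rewrite /col_seq (nth_map i) ?size_enum_ord // nth_ord_enum; ring.
rewrite (sum_cols G) (bigD1 j) //= [X in _ * X]big1 ?mulr1; last first.
  by move=> k /negbTE kj; rewrite /G kj (sum_mc hK hS).
rewrite /G eqxx; apply: (marg_mc hK hS); by rewrite -ltnS.
Qed.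

End Mat.

Section Gen.
Variable R : realType.

Lemma sum_supp (I : finType) (p f : I -> R) : (forall x, 0 <= p x) ->
  \sum_(x | 0 < p x) p x * f x = \sum_x p x * f x.
Proof.
move=> p0; rewrite big_mkcond /=; apply: eq_bigr => x _.
case: ifP => // /negbT; rewrite -leNgt => px.
have -> : p x = 0 by apply/eqP; rewrite eq_le px p0.
by rewrite mul0r.
Qed.

Lemma sum_supp1 (I : finType) (p : I -> R) : (forall x, 0 <= p x) ->
  \sum_(x | 0 < p x) p x = \sum_x p x.
Proof.
move=> p0; rewrite big_mkcond /=; apply: eq_bigr => x _.
case: ifP => // /negbT; rewrite -leNgt => px.
by apply/eqP; rewrite eq_le px p0.
Qed.

Lemma gibbs_term (p q : R) : 0 < p -> 0 < q ->
  p - q <= p * - ln q + p * ln p.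
Proof.
move=> p0 q0.
have h : ln (q / p) <= q / p - 1.
  have qp : 0 < q / p by rewrite divr_gt0.
  have := @le_ln1Dx R (q / p - 1); rewrite addrCA subrr addr0; apply.
  lra.
rewrite ln_div ?posrE // in h.
have h2 : p * (ln q - ln p) <= p * (q / p - 1) by rewrite ler_pM2l.
have e : p * (q / p - 1) = q - p by field; rewrite gt_eqF.
rewrite e in h2; lra.
Qed.

Lemma gibbs (I : finType) (p q : I -> R) : (forall x, 0 <= p x) ->
  \sum_x p x = 1 -> \sum_(x | 0 < p x) q x <= 1 ->
  (forall x, 0 < p x -> 0 < q x) ->
  - \sum_x p x * ln (p x) <= \sum_x p x * - ln (q x).
Proof.
move=> p0 p1 q1 pq.
rewrite -!(sum_supp _ p0) -subr_ge0 opprK.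
rewrite -big_split /=.
apply: le_trans (_ : \sum_(x | 0 < p x) (p x - q x) <= _).
  by rewrite big_split /= sumrN (sum_supp1 p0) p1 subr_ge0.
by apply: ler_sum => x px; apply: gibbs_term => //; apply: pq.
Qed.

Variable T : finType.

Lemma flat_inj m : injective (@flat T m).
Proof.
move=> x y; rewrite /flat => e.
have : [seq x p.1 p.2 | p <- [seq (i, j) | i <- enum 'I_m, j <- enum 'I_m]] =
       [seq y p.1 p.2 | p <- [seq (i, j) | i <- enum 'I_m, j <- enum 'I_m]].
  by rewrite !map_allpairs.
move/eq_in_map => H; apply/matrixP => i j; apply: (H (i, j)).
by apply/allpairsP; exists (i, j); rewrite !mem_enum.
Qed.

Lemma pmf_le1 (Q : seq T -> R) : seq_model Q -> forall s, Q s <= 1.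
Proof.
move=> [Q0 Q1] s; rewrite -lee_fin -Q1.
apply: esum_ge; exists [set s]; first by split => //; exact: finite_set1.
by rewrite fsbig_set1.
Qed.

Lemma sum_flat_le1 m (Q : seq T -> R) (A : pred 'M[T]_m) : seq_model Q ->
  \sum_(x in A) Q (flat x) <= 1.
Proof.
move=> [Q0 Q1]; rewrite -lee_fin -Q1 -sumEFin.
apply: esum_ge; exists [set` [seq flat x | x <- enum A]].
  by split => //; exact: finite_seq.
rewrite -fsbig_seq ?big_map ?big_enum //.
by rewrite map_inj_uniq ?enum_uniq //; exact: flat_inj.
Qed.

Lemma neglog_ge0 (q : R) : q <= 1 -> (0 <= neglog q)%E.
Proof.
by move=> q1; rewrite /neglog; case: ifP => // _; rewrite lee_fin oppr_ge0 ln_le0.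
Qed.

Lemma loss_pinf (law : forall m, 'M[T]_m -> R) m (Q : seq T -> R) :
  (0 < m)%N -> (forall s, Q s <= 1) -> (forall x, 0 <= law m x) ->
  forall x, 0 < law m x -> ~~ (0 < Q (flat x)) -> loss law m Q = +oo%E.
Proof.
move=> m0 Q1 l0 x lx qx.
rewrite /loss (bigD1 x) //= {1}/neglog (negbTE qx) gt0_muley ?lte_fin //.
have s0 : (0 <= \sum_(i | (0 < law m i)%R && (i != x)) (law m i)%:E * neglog (Q (flat i)))%E.
  by apply: sume_ge0 => y _; apply: mule_ge0; rewrite ?lee_fin ?neglog_ge0.
rewrite addye; last by rewrite gt_eqF // (lt_le_trans _ s0) // ltNy0.
by rewrite gt0_muley // lte_fin invr_gt0 ltr0n expn_gt0 m0.
Qed.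

Lemma min_seq (law : forall m, 'M[T]_m -> R) n :
  (forall x, 0 <= law n.+1 x) -> \sum_x law n.+1 x = 1 ->
  min_loss law (@seq_model R T) n.+1 =
  ((((n.+1 ^ 2)%N)%:R)^-1 * - \sum_x law n.+1 x * ln (law n.+1 x))%:E.
Proof.
set m := n.+1 => l0 l1.
set c := (((m ^ 2)%N)%:R)^-1 : R.
have c0 : 0 <= c by rewrite invr_ge0 ler0n.
have lb : forall Q, seq_model Q ->
    ((c * - \sum_x law m x * ln (law m x))%:E <= loss law m Q)%E.
  move=> Q hQ; have Q1 := pmf_le1 hQ.
  case: (boolP [forall x, (0 < law m x) ==> (0 < Q (flat x))]) => [/forallP H|].
    rewrite /loss (eq_bigr (fun x => (law m x * - ln (Q (flat x)))%:E)); last first.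
      by move=> x lx; rewrite /neglog (implyP (H x) lx) EFinM.
    rewrite sumEFin -EFinM lee_fin ler_wpM2l //.
    rewrite (sum_supp (fun x => - ln (Q (flat x))) l0).
    apply: gibbs => //.
      exact: (sum_flat_le1 [pred x | 0 < law m x] hQ).
    by move=> x /(implyP (H x)).
  move=> /forallPn [x]; rewrite negb_imply => /andP [lx qx].
  by rewrite (loss_pinf _ Q1 l0 lx qx) // leey.
pose Q0 := fun s => \sum_(x | flat x == s) law m x.
have Q0f : forall x, Q0 (flat x) = law m x.
  by move=> x; rewrite /Q0 (big_pred1 x) // => y; rewrite /= (inj_eq (@flat_inj m)).
have hQ0 : seq_model Q0.
  split; first by move=> s; apply: sumr_ge0.
  rewrite (esumID [set` [seq flat x | x <- enum 'M[T]_m]]); last first.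
    by move=> s _; rewrite lee_fin sumr_ge0.
  rewrite [X in (_ + X)%E]esum1 ?adde0; last first.
    move=> s [_ /= ns]; rewrite /Q0 big_pred0 // => x.
    apply/negbTE/eqP => e; apply: ns; rewrite -e; apply/mapP; exists x => //.
    by rewrite mem_enum.
  rewrite setTI esum_fset; last 2 first.
  - exact: finite_seq.
  - by move=> s _; rewrite lee_fin sumr_ge0.
  rewrite -fsbig_seq; last by rewrite map_inj_uniq ?enum_uniq //; exact: flat_inj.
  rewrite big_map big_enum /= sumEFin.
  by under eq_bigr do rewrite Q0f; rewrite l1.
apply/eqP; rewrite eq_le; apply/andP; split.
  apply: ereal_inf_lbound; exists Q0 => //.
  rewrite /loss; under eq_bigr => x lx do rewrite Q0f /neglog lx -EFinM.
  rewrite sumEFin -EFinM; congr (_%:E); congr (_ * _).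
  rewrite (sum_supp (fun x => - ln (law m x)) l0) -sumrN.
  by apply: eq_bigr => x _; rewrite mulrN.
by apply: le_ereal_inf_tmp => _ [Q hQ <-]; exact: lb.
Qed.

Lemma pmfc_le1 (I : choiceType) (p : I -> R) : is_pmf_count p -> forall s, p s <= 1.
Proof.
move=> [Q0 Q1] s; rewrite -lee_fin -Q1.
apply: esum_ge; exists [set s]; first by split => //; exact: finite_set1.
by rewrite fsbig_set1.
Qed.

Lemma ln_prod_seq (I : Type) (r : seq I) (q : I -> R) : (forall j, 0 < q j) ->
  ln (\prod_(j <- r) q j) = \sum_(j <- r) ln (q j).
Proof.
move=> q0.
suff: 0 < \prod_(j <- r) q j /\ ln (\prod_(j <- r) q j) = \sum_(j <- r) ln (q j) by case.
apply: (big_rec2 (fun x y => 0 < x /\ ln x = y)); first by rewrite ln1.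
move=> j y1 y2 _ [y0 <-]; split; first by rewrite mulr_gt0.
by rewrite lnM // posrE.
Qed.

Lemma exists_supp m (p : 'M[T]_m -> R) (f : 'M[T]_m -> bool) :
  (forall x, 0 <= p x) -> 0 < \sum_x p x * (if f x then 1 else 0) ->
  exists x, 0 < p x /\ f x.
Proof.
move=> p0 s0; case: (boolP [exists x, (0 < p x) && f x]) => [/existsP [x /andP [? ?]]|].
  by exists x.
move=> /existsPn H; move: s0; rewrite big1 ?ltxx // => x _.
case: ifP => fx; last by rewrite mulr0.
have := H x; rewrite fx andbT -leNgt => px.
have -> : p x = 0 by apply/eqP; rewrite eq_le px p0.
by rewrite mul0r.
Qed.

Lemma uni_lb (law : forall m, 'M[T]_m -> R) n (pi : T -> R) :
  (forall x, 0 <= law n.+1 x) -> \sum_x law n.+1 x = 1 ->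
  (forall i j (h : T -> R), \sum_x law n.+1 x * h (x i j) = \sum_a pi a * h a) ->
  (forall a, 0 < pi a) -> is_pmf pi ->
  forall Q, (@unigram_class R T) Q -> ((entropy pi)%:E <= loss law n.+1 Q)%E.
Proof.
set m := n.+1 => l0 l1 l3 pi0 hpi Q [Qn [Qt [hQn hQt ->]]].
have Qt0 := hQt.1.
have Qt1 : forall a, Qt a <= 1.
  by move=> a; rewrite -hQt.2 (bigD1 a) //= lerDl sumr_ge0.
have Qn0 := hQn.1.
have Qn1 := pmfc_le1 hQn.
have Q1 : forall s, unigram Qn Qt s <= 1.
  move=> s; rewrite /unigram mulr_ile1 ?prodr_ge0 ?prodr_ile1 //.
  by move=> r _; rewrite Qt0 Qt1.
have sz : forall x : 'M[T]_m, size (flat x) = (m * m)%N.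
  by move=> x; rewrite /flat size_allpairs size_enum_ord.
case: (boolP [exists a, ~~ (0 < Qt a)]) => [/existsP [a Qta]|/existsPn Qtp].
  have [x [lx xa]] : exists x, 0 < law m x /\ x ord0 ord0 == a.
    apply: exists_supp => //; rewrite (l3 ord0 ord0 (fun b => if b == a then 1 else 0)) (bigD1 a) //= eqxx mulr1.
    rewrite big1 ?addr0 // => b /negbTE ->; exact: mulr0.
  rewrite (loss_pinf _ Q1 l0 lx) ?leey //.
  have ain : a \in flat x.
    by apply/allpairsP; exists (ord0, ord0); rewrite !mem_enum (eqP xa).
  rewrite /unigram (big_rem a) //=.
  have -> : Qt a = 0 by apply/eqP; rewrite eq_le Qt0 andbT leNgt.
  by rewrite mul0r mulr0 ltxx.
have Qtp' : forall a, 0 < Qt a by move=> a; have := Qtp a; rewrite negbK.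
have [x0 [lx0 _]] : exists x, 0 < law m x /\ true.
  by apply: exists_supp => //; under eq_bigr do rewrite mulr1; rewrite l1.
case: (boolP (0 < Qn (m * m)%N)) => Qnp; last first.
  rewrite (loss_pinf _ Q1 l0 lx0) ?leey //.
  have Qz : Qn (m * m)%N = 0 by apply/eqP; rewrite eq_le Qn0 andbT leNgt.
  by rewrite /unigram sz Qz mul0r ltxx.
set c := (((m ^ 2)%N)%:R)^-1 : R.
have c0 : 0 <= c by rewrite invr_ge0 ler0n.
have Qp : forall x : 'M[T]_m, 0 < unigram Qn Qt (flat x).
  by move=> x; rewrite /unigram sz mulr_gt0 // prodr_gt0.
rewrite /loss (eq_bigr (fun x => (law m x * - ln (unigram Qn Qt (flat x)))%:E)); last first.
  by move=> x _; rewrite /neglog Qp EFinM.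
rewrite sumEFin -EFinM lee_fin.
pose g := fun a => - ln (Qt a).
have step : forall x : 'M[T]_m, law m x * \sum_(r <- flat x) g r <= law m x * - ln (unigram Qn Qt (flat x)).
  move=> x; apply: ler_wpM2l => //.
  rewrite /unigram sz lnM ?posrE ?prodr_gt0 // ln_prod_seq // opprD sumrN.
  have := ln_le0 (Qn1 (m * m)%N); lra.
apply: le_trans (_ : c * \sum_(x | 0 < law m x) law m x * \sum_(r <- flat x) g r <= _); last first.
  by apply: ler_wpM2l => //; apply: ler_sum => x _; exact: step.
rewrite (sum_supp (fun x => \sum_(r <- flat x) g r) l0).
have E : forall x : 'M[T]_m, law m x * \sum_(r <- flat x) g r =
    \sum_i \sum_j law m x * g (x i j).
  move=> x; rewrite /flat big_allpairs_dep /= big_distrr /= big_enum.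
  by apply: eq_bigr => i _; rewrite big_distrr /= big_enum.
under eq_bigr do rewrite E.
rewrite exchange_big /=.
under eq_bigr => i _ do (rewrite exchange_big /=; under eq_bigr => j _ do rewrite (l3 i j g)).
rewrite !sumr_const card_ord -mulrnA mulnn -mulr_natr /c mulrCA mulVf ?mulr1; last first.
  by rewrite pnatr_eq0 expn_eq0.
rewrite /entropy (sum_supp (fun a => ln (pi a)) hpi.1); apply: gibbs => //.
- exact: hpi.1.
- exact: hpi.2.
- by rewrite (eq_bigl predT) ?hQt.2 // => a; rewrite /= pi0.
Qed.

End Gen.

Section Fin.
Variables (R : realType) (T : finType) (P : T -> T -> R) (pi : T -> R).
Hypotheses (hK : is_kernel P) (hS : stationary P pi).

Lemma nstep_ge0 n a b : 0 <= nstep P n a b.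
Proof.
elim: n a b => [|n IH] a b /=; first by case: eqP.
by apply: sumr_ge0 => c _; rewrite mulr_ge0 ?IH ?hK.1.
Qed.

Lemma nstep_stat n b : \sum_a pi a * nstep P n a b = pi b.
Proof.
elim: n b => [|n IH] b /=.
  rewrite (bigD1 b) //= eqxx mulr1 big1 ?addr0 // => a /negbTE ->; exact: mulr0.
under eq_bigr do rewrite big_distrr /=.
rewrite exchange_big /=.
under eq_bigr => c _ do (under eq_bigr do rewrite mulrA; rewrite -big_distrl /= IH).
exact: hS.2.
Qed.

Lemma pi_pos : irreducible P -> forall b, 0 < pi b.
Proof.
move=> hirr b.
have [a0 pa0] : exists a, 0 < pi a.
  case: (boolP [exists a, 0 < pi a]) => [/existsP //|/existsPn H].
  have : \sum_a pi a <= 0 by apply: sumr_le0 => a _; rewrite leNgt H.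
  by rewrite hS.1.2 ler10.
have [n hn] := hirr a0 b.
rewrite -(nstep_stat n b) (bigD1 a0) //=.
apply: lt_le_trans (_ : pi a0 * nstep P n a0 b <= _); first exact: mulr_gt0.
rewrite lerDl; apply: sumr_ge0 => a _; rewrite mulr_ge0 ?nstep_ge0 ?hS.1.1 //.
Qed.

Lemma law_rows_T m (x : 'M[T]_m) : law_rows pi P x = law_cols pi P (x^T).
Proof. by apply: eq_bigr => i _; congr mc_prob; apply: eq_map => j; rewrite mxE. Qed.

Lemma sum_tr m (F : 'M[T]_m -> R) : \sum_x F x^T = \sum_x F x.
Proof. by rewrite [RHS](reindex_inj (@trmx_inj _ m m)). Qed.

Definition good (law : forall m, 'M[T]_m -> R) n :=
  [/\ forall x, 0 <= law n.+1 x, \sum_x law n.+1 x = 1,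
   \sum_x law n.+1 x * ln (law n.+1 x) = n.+1%:R * (h0 pi + n%:R * rho P pi) &
   forall i j (h : T -> R), \sum_x law n.+1 x * h (x i j) = \sum_a pi a * h a].

Lemma good_cols n : good (law_cols pi P) n.
Proof.
split.
- exact: law_cols_ge0.
- exact: law_cols_sum.
- exact: law_cols_ent.
- move=> i j h; exact: law_cols_marg.
Qed.

Lemma good_rows n : good (law_rows pi P) n.
Proof.
split.
- by move=> x; rewrite law_rows_T; exact: law_cols_ge0.
- by under eq_bigr do rewrite law_rows_T; rewrite (sum_tr (fun x => law_cols pi P x)) law_cols_sum.
- under eq_bigr do rewrite law_rows_T.
  by rewrite (sum_tr (fun x => law_cols pi P x * ln (law_cols pi P x))) law_cols_ent.
- move=> i j h; under eq_bigr do rewrite law_rows_T.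
  rewrite -(law_cols_marg hK hS j i h) -(sum_tr (fun x => law_cols pi P x * h (x j i))).
  by apply: eq_bigr => x _; rewrite mxE.
Qed.

End Fin.

Theorem proposition1 (R : realType) (T : finType) (P : T -> T -> R)
  (pi : T -> R) (hP : ergodic P) (hpi : stationary P pi)
  (law : forall m, 'M[T]_m -> R)
  (hlaw : law = law_cols pi P \/ law = law_rows pi P) :
  (limn_einf (fun m => min_loss law (@unigram_class R T) m)
     >= (entropy pi)%:E)%E /\
  ((fun m => min_loss law (@seq_model R T) m) @ \oo
     --> (entropy_rate pi P)%:E).
Proof.
have [hKer [hirr _]] := hP.
have hgood : forall n, good P pi law n.
  by move=> n; case: hlaw => ->; [apply: good_cols | apply: good_rows].
have pi0 := pi_pos hKer hpi hirr.
split.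
  rewrite limn_einf_lim; apply: lime_ge; first exact: is_cvg_einfs.
  near=> k.
  have k1 : (0 < k)%N by near: k; exists 1%N.
  apply: le_ereal_inf_tmp => _ [j /= kj <-].
  case: j kj => [|j] kj; first by move: (leq_trans k1 kj).
  apply: le_ereal_inf_tmp => _ [Q hQ <-].
  have [g1 g2 _ g4] := hgood j.
  exact: (uni_lb g1 g2 g4 pi0 hpi.1 hQ).
have Hrate : entropy_rate pi P = - rho P pi.
  rewrite /entropy_rate /rho; congr (- _); apply: eq_bigr => a _.
  under eq_bigr do rewrite -mulrA.
  by rewrite -big_distrr (sum_supp (fun b => ln (P a b)) (hKer.1 a)).
rewrite Hrate -cvg_shiftS.
have E : forall n, min_loss law (@seq_model R T) n.+1 =
    (- rho P pi - (h0 pi - rho P pi) * harmonic n)%:E.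
  move=> n; have [g1 g2 g3 _] := hgood n.
  rewrite min_seq // g3; congr EFin; rewrite /harmonic /= natrX.
  by field; rewrite addrC natr1 pnatr_eq0.
rewrite (_ : [sequence _]_n = fun n => (- rho P pi - (h0 pi - rho P pi) * harmonic n)%:E); last first.
  by apply/funext => n /=; rewrite E.
apply/fine_cvgP; split; first exact: nearW.
have := cvgB (cvg_cst (- rho P pi)) (cvgM (cvg_cst (h0 pi - rho P pi)) (@cvg_harmonic R)).
rewrite mulr0 subr0; move=> /(_ _ _ _ _); apply => //.
Unshelve. all: by end_near.
Qed.
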